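(* Let $X$ be a topological space and $A$ a finitely non-Hausdorff subset of $X$. Then $\overline{A}$ is a finitely non-Hausdorff subset of $X$.
   Context: A non-empty subset $A$ of a topological space $X$ is called finitely non-Hausdorff if for every non-empty finite subset $F\subseteq A$ and every family $\{U_x:x\in F\}$ where each $U_x$ is an open neighborhood of $x$, we have $\bigcap_{x\in F}U_x\neq\emptyset$. *)

(* Defs.v *)
From HB Require Import structures.
From mathcomp Require Import all_boot all_order.
From mathcomp Require Import all_classical topology.
Set Implicit Arguments. Unset Strict Implicit. Unset Printing Implicit Defensive.
Local Open Scope classical_set_scope.

Definition finitely_non_hausdorff (X : topologicalType) (A : set X) : Prop :=
  A !=set0 /\
  forall (F : set X) (U : X -> set X),
    finite_set F -> F !=set0 -> F `<=` A ->
    (forall x, F x -> open (U x) /\ U x x) ->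
    \bigcap_(x in F) U x !=set0.

(* Main.v *)
Require Import Defs.
From HB Require Import structures.
From mathcomp Require Import all_boot all_order.
From mathcomp Require Import all_classical topology.
From mathcomp Require Import finmap.
Local Open Scope classical_set_scope.

Theorem corollary2p7 (X : topologicalType) (A : set X) :
  finitely_non_hausdorff A -> finitely_non_hausdorff (closure A).
Proof.
case=> nA HA; split.
  by case: nA => a Aa; exists a; exact: subset_closure.
move=> F U fF [x0 Fx0] FA HU.
have : forall x, exists a, F x -> A a /\ U x a.
  move=> x; have [Fx|nFx] := pselect (F x); last by exists x0.
  have [oU Ux] := HU x Fx.
  have nU : nbhs x (U x) by apply: open_nbhs_nbhs; split.
  have [a [Aa Ua]] := FA x Fx (U x) nU.
  by exists a.
move=> /choice [f Hf].
have [D FD] := finite_fsetP.1 fF.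
pose W a := (\bigcap_(x in [set` D]) [set y | f x = a -> U x y])°.
have Wa : forall x, F x -> W (f x) (f x).
  move=> x Fx; apply: nbhs_singleton; apply: nbhs_interior.
  apply: filter_bigI => y yD.
  have Fy : F y by rewrite FD.
  have [e|ne] := pselect (f y = f x).
    have [oU Uy] := HU y Fy.
    have nU : nbhs (f x) (U y).
      apply: open_nbhs_nbhs; split => //; rewrite -e; exact: (Hf y Fy).2.
    by apply: filterS nU => z Uz.
  have -> : [set z | f y = f x -> U y z] = setT by apply/seteqP; split => // z _ /ne.
  exact: filterT.
have [z Hz] : \bigcap_(a in f @` F) W a !=set0.
  apply: HA.
  - exact: finite_image.
  - by exists (f x0), x0.
  - by move=> a [x Fx <-]; exact: (Hf x Fx).1.
  - by move=> a [x Fx <-]; split; [exact: open_interior | exact: Wa].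
exists z => x Fx.
have := Hz (f x) (ex_intro2 _ _ x Fx erefl).
move=> /interior_subset; apply; first by rewrite -FD.
by [].
Qed.
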